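(* Let $f:\mathbb{F}_q^n\to\mathbb{F}_q^n$ be a monomial dynamical system. Then $f$ is a fixed point system if and only if both $T(f):\mathbb{F}_2^n\to\mathbb{F}_2^n$ and $L(f):(\mathbb{Z}/(q-1))^n\to(\mathbb{Z}/(q-1))^n$ are fixed point systems.
   Context: A monomial system $f=(f_1,\dots,f_n):\mathbb{F}_q^n\to\mathbb{F}_q^n$ has $f_i=x_1^{a_{i1}}\cdots x_n^{a_{in}}$ with exponent matrix $A=(a_{ij})$, $a_{ij}\in\mathbb{Z}_{\ge0}$. $T(f)=(g_1,\dots,g_n)$ is the Boolean monomial system with $g_i=x_1^{v_{i1}}\cdots x_n^{v_{in}}$, where $v_{ij}=1$ if $a_{ij}\ne0$ and $v_{ij}=0$ otherwise. $L(f)$ is the linear map $\mathbf s\mapsto A\mathbf s$ over the ring $\mathbb{Z}/(q-1)$. A map $h:X\to X$ on a finite set is a fixed point system if every periodic point is fixed: $h^k(x)=x$ for some $k\ge1$ implies $h(x)=x$. *)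

(* Defs.v *)
From mathcomp Require Import all_boot all_order all_algebra all_field.
Set Implicit Arguments. Unset Strict Implicit. Unset Printing Implicit Defensive.
Import GRing.Theory.
Local Open Scope ring_scope.

Definition fixed_point_system (X : Type) (h : X -> X) : Prop :=
  forall (x : X) (k : nat), (0 < k)%N -> iter k h x = x -> h x = x.

Definition monomial_map (F : finFieldType) (n : nat) (A : 'M[nat]_n)
  (x : {ffun 'I_n -> F}) : {ffun 'I_n -> F} :=
  [ffun i => \prod_(j < n) x j ^+ A i j].

Definition T_map (n : nat) (A : 'M[nat]_n)
  (x : {ffun 'I_n -> 'F_2}) : {ffun 'I_n -> 'F_2} :=
  [ffun i => \prod_(j < n) x j ^+ (A i j != 0%N : nat)].

Lemma card_finField_pred_gt0 (F : finFieldType) : (0 < #|F|.-1)%N.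
Proof.
have: (1 < #|F|)%N.
  rewrite (cardD1 (0 : F)) (cardD1 (1 : F)) !inE oner_neq0 /=.
  by [].
by case: #|F| => [|[|m]].
Qed.

(* L(f): s |-> A s over Z/(q-1), elements represented as 'I_(q-1), q = #|F|. *)
Definition L_map (F : finFieldType) (n : nat) (A : 'M[nat]_n)
  (s : {ffun 'I_n -> 'I_(#|F|.-1)}) : {ffun 'I_n -> 'I_(#|F|.-1)} :=
  [ffun i => Ordinal (ltn_pmod (\sum_(j < n) A i j * s j)%N
                               (card_finField_pred_gt0 F))].

(* Main.v *)
Require Import Defs.
From mathcomp Require Import all_boot all_order all_algebra all_field all_fingroup all_solvable.
Set Implicit Arguments. Unset Strict Implicit. Unset Printing Implicit Defensive.
Import GRing.Theory.
Local Open Scope ring_scope.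

Section Prim.
Variable F : finFieldType.
Local Notation N := (#|F|.-1).

Lemma unit_expN (x : F) : x != 0 -> x ^+ N = 1.
Proof.
move=> nz; apply: (mulfI nz); rewrite mulr1 -exprS.
by rewrite prednK ?expf_card // (ltnW (finNzRing_gt1 F)).
Qed.

Lemma prim_exists : exists z : F, N.-primitive_root z.
Proof.
have : has N.-primitive_root [seq x <- enum F | x != 0].
  apply: has_prim_root.
  - exact: card_finField_pred_gt0.
  - apply/allP => x; rewrite mem_filter => /andP[nz _].
    by rewrite unity_rootE unit_expN.
  - by rewrite filter_uniq // enum_uniq.
  - rewrite size_filter enumT -(cardC1 (0:F)) cardE /enum_mem size_filter.
    by apply: eq_leq; apply: eq_count => x; rewrite !inE.
by move/hasP=> [z _ Hz]; exists z.
Qed.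

Lemma F2_cases (b : 'F_2) : b = 0 \/ b = 1.
Proof. by case: b => [[|[|b]] Hb]; [left|right|]; try apply: val_inj. Qed.
End Prim.

Lemma iter_conj (X Y : Type) (g : X -> X) (h : Y -> Y) (E : Y -> X) :
  (forall y, g (E y) = E (h y)) -> forall k y, iter k g (E y) = E (iter k h y).
Proof. by move=> H; elim=> [|k IH] y //=; rewrite IH H. Qed.

Lemma conj_fps (X Y : Type) (g : X -> X) (h : Y -> Y) (E : Y -> X) :
  injective E -> (forall y, g (E y) = E (h y)) ->
  fixed_point_system g -> fixed_point_system h.
Proof.
move=> Einj H Hg y k k0 hk; apply: Einj; rewrite -H; apply: (Hg _ k k0).
by rewrite (iter_conj H) hk.
Qed.

Lemma eventually_fixed (X : finType) (h : X -> X) (x : X) :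
  fixed_point_system h ->
  exists a, forall m, (a <= m)%N -> iter m.+1 h x = iter m h x.
Proof.
move=> Hh.
pose g (i : 'I_#|X|.+1) := iter i h x.
have : ~~ injectiveb g.
  apply/negP => /injectiveP /leq_card; by rewrite card_ord ltnn.
move/injectiveP => ninj.
have [i [j [ij gij]]] : exists i j : 'I_#|X|.+1, (i < j)%N /\ g i = g j.
  case: (boolP [exists i : 'I_#|X|.+1, exists j : 'I_#|X|.+1, (i < j)%N && (g i == g j)]).
    by move=> /existsP[i /existsP[j /andP[lt /eqP e]]]; exists i, j.
  move=> /negP nex; exfalso; apply: ninj => i j e.
  case: (ltngtP i j) => [lt|lt|eq]; last exact: val_inj.
  - by exfalso; apply: nex; apply/existsP; exists i; apply/existsP; exists j; rewrite lt e eqxx.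
  - by exfalso; apply: nex; apply/existsP; exists j; apply/existsP; exists i; rewrite lt e eqxx.
have fixy : h (iter i h x) = iter i h x.
  apply: (Hh _ (j - i)%N); first by rewrite subn_gt0.
  by rewrite -iterD subnK ?(ltnW ij).
exists i => m im; elim: m im => [|m IH].
  by rewrite leqn0 => /eqP i0; move: fixy; rewrite i0.
rewrite leq_eqVlt => /orP[/eqP <-|]; first by rewrite iterS fixy.
rewrite ltnS => im.
by rewrite [iter m.+2 h x]iterS IH // -iterS IH.
Qed.

Section Main.
Variables (F : finFieldType) (n : nat) (A : 'M[nat]_n).
Local Notation N := (#|F|.-1).
Local Notation f := (@monomial_map F n A).
Local Notation T := (@T_map n A).
Local Notation L := (@L_map F n A).

Lemma f_eq0 x i : (f x i == 0) = [exists j, (A i j != 0%N) && (x j == 0)].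
Proof.
rewrite ffunE; apply/prodf_eq0/existsP => [[j _ H]|[j H]]; exists j => //;
  by move: H; rewrite expf_eq0 lt0n.
Qed.

Lemma T_eq0 u i : (T u i == 0) = [exists j, (A i j != 0%N) && (u j == 0)].
Proof.
rewrite ffunE; apply/prodf_eq0/existsP => [[j _ H]|[j H]]; exists j => //;
  by move: H; rewrite expf_eq0 lt0b.
Qed.

Lemma T_conj : fixed_point_system f -> fixed_point_system T.
Proof.
pose E (u : {ffun 'I_n -> 'F_2}) : {ffun 'I_n -> F} :=
  [ffun j => if u j == 0 then 0 else 1].
have key u j : (E u j == 0) = (u j == 0).
  by rewrite ffunE; case: ifP; rewrite ?eqxx ?oner_eq0.
apply: (@conj_fps _ _ _ _ E).
  move=> u v /ffunP e; apply/ffunP => j; move: (e j); rewrite !ffunE.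
  by case: (F2_cases (u j)) => ->; case: (F2_cases (v j)) => ->;
     rewrite ?eqxx ?oner_eq0 // => /eqP; rewrite ?oner_eq0 // eq_sym oner_eq0.
move=> u; apply/ffunP => i.
case: (boolP [exists j, (A i j != 0%N) && (u j == 0)]) => ex.
  have -> : E (T u) i = 0 by rewrite ffunE T_eq0 ex.
  apply/eqP; rewrite f_eq0; move: ex; apply: contraLR.
  rewrite !negb_exists => /forallP H; apply/forallP => j; by rewrite -key H.
have -> : E (T u) i = 1 by rewrite ffunE T_eq0 (negbTE ex).
rewrite ffunE; apply: big1 => j _.
case: (A i j =P 0%N) => [->|/eqP Anz]; first by rewrite expr0.
have uj : u j != 0.
  apply: contra ex => uj; apply/existsP; exists j; by rewrite Anz uj.
by rewrite ffunE (negbTE uj) expr1n.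
Qed.

Lemma L_conj : fixed_point_system f -> fixed_point_system L.
Proof.
have [z zp] := prim_exists F.
pose E (s : {ffun 'I_n -> 'I_N}) : {ffun 'I_n -> F} := [ffun j => z ^+ s j].
apply: (@conj_fps _ _ _ _ E).
  move=> u v /ffunP e; apply/ffunP => j; move: (e j); rewrite !ffunE => /eqP.
  rewrite (eq_prim_root_expr zp) !modn_small // => /eqP H; exact: val_inj.
move=> s; apply/ffunP => i; rewrite !ffunE /= (prim_expr_mod zp) -prodrXr.
by apply: eq_bigr => j _; rewrite ffunE -exprM mulnC.
Qed.

Lemma back : fixed_point_system T -> fixed_point_system L ->
  fixed_point_system f.
Proof.
move=> HT HL x k k0 hk.
pose U (y : {ffun 'I_n -> F}) : {ffun 'I_n -> 'F_2} :=
  [ffun j => if y j == 0 then 0 else 1].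
have keyU y j : (U y j == 0) = (y j == 0).
  by rewrite ffunE; case: ifP; rewrite ?eqxx ?oner_eq0.
have UT y : T (U y) = U (f y).
  apply/ffunP => i.
  case: (boolP [exists j, (A i j != 0%N) && (y j == 0)]) => ex.
    have -> : U (f y) i = 0 by rewrite ffunE f_eq0 ex.
    apply/eqP; rewrite T_eq0; move: ex; apply: contraLR.
    rewrite !negb_exists => /forallP H; apply/forallP => j; by rewrite -keyU H.
  have -> : U (f y) i = 1 by rewrite ffunE f_eq0 (negbTE ex).
  rewrite ffunE; apply: big1 => j _.
  case: eqP => [_|/eqP Anz] /=; first by rewrite expr0.
  have yj : y j != 0.
    apply: contra ex => yj; apply/existsP; exists j; by rewrite Anz yj.
  by rewrite expr1 ffunE (negbTE yj).
have H1 i : (x i == 0) = [exists j, (A i j != 0%N) && (x j == 0)].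
  have e : T (U x) = U x.
    apply: (HT _ k k0); by rewrite (iter_conj UT) hk.
  rewrite -f_eq0 -(keyU x) -(keyU (f x)) -UT e.
  by [].
have [z zp] := prim_exists F.
pose o0 := Ordinal (card_finField_pred_gt0 F).
pose s : {ffun 'I_n -> 'I_N} := [ffun j => odflt o0 [pick t : 'I_N | z ^+ t == x j]].
have slog j : x j != 0 -> z ^+ s j = x j.
  move=> nz; rewrite ffunE; case: pickP => [t /eqP //|none].
  have [t ht] := prim_rootP zp (unit_expN nz).
  by move: (none t); rewrite ht eqxx.
pose E (t : {ffun 'I_n -> 'I_N}) : {ffun 'I_n -> F} := [ffun j => z ^+ t j].
have EL t : f (E t) = E (L t).
  apply/ffunP => i; rewrite !ffunE /= (prim_expr_mod zp) -prodrXr.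
  by apply: eq_bigr => j _; rewrite ffunE -exprM mulnC.
pose M (v : {ffun 'I_n -> F}) : {ffun 'I_n -> F} :=
  [ffun i => if x i == 0 then 0 else v i].
have HM v : f (M v) = M (f v).
  apply/ffunP => i; rewrite [M (f v) i]ffunE; case: ifP => xi.
    apply/eqP; rewrite f_eq0; move: xi; rewrite H1 => /existsP[j /andP[Aj xj]].
    by apply/existsP; exists j; rewrite Aj ffunE xj eqxx.
  rewrite !ffunE; apply: eq_bigr => j _.
  case: (A i j =P 0%N) => [->|/eqP Anz]; first by rewrite !expr0.
  have xj : x j != 0.
    apply/negP => xj; suff: [exists j, (A i j != 0%N) && (x j == 0)] by rewrite -H1 xi.
    by apply/existsP; exists j; rewrite Anz xj.
  by rewrite ffunE (negbTE xj).
have Hx : x = M (E s).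
  apply/ffunP => j; rewrite ffunE; case: ifP => [/eqP -> //|/negbT nz].
  by rewrite ffunE slog.
have MEL t : f (M (E t)) = M (E (L t)) by rewrite HM EL.
have itx m : iter m f x = M (E (iter m L s)).
  by rewrite Hx (iter_conj MEL).
have itk a : iter (a * k) f x = x.
  elim: a => [|a IH] //; by rewrite mulSn iterD IH hk.
have [a Ha] := eventually_fixed s HL.
have am : (a <= a * k)%N by rewrite leq_pmulr.
by rewrite -{1}(itk a) -iterS !itx Ha // -itx itk.
Qed.
End Main.

Theorem mainTheorem6 (F : finFieldType) (n : nat) (A : 'M[nat]_n) :
  fixed_point_system (@monomial_map F n A) <->
  fixed_point_system (@T_map n A) /\ fixed_point_system (@L_map F n A).
Proof.
split=> [H|[HT HL]]; last exact: back.
split; [exact: (T_conj H) | exact: (L_conj H)].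
Qed.
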